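(* For every pure context $F$, terms $t_0,t_1$ and variable $x\notin\mathrm{fv}(F)$, we have $F[(\lambda x.t_0)\,t_1] \sim (\lambda x.F[t_0])\,t_1$.
   Context: The calculus $\lambda_{\mathcal S}$. Terms: $t ::= x \mid \lambda x.t \mid t\,t \mid \mathcal{S}k.t \mid \langle t\rangle$ (shift and reset); values: $v ::= \lambda x.t \mid x$. $\lambda x.t$ binds $x$, $\mathcal{S}k.t$ binds $k$; terms up to $\alpha$-conversion; $\mathrm{fv}$ free variables; capture-avoiding substitution $t\{v/x\}$. Pure contexts $F ::= [\,] \mid v\,F \mid F\,t$ (free variables of a context are those of its subterms); evaluation contexts $E ::= [\,] \mid v\,E \mid E\,t \mid \langle E\rangle$. Reduction: $E[(\lambda x.t)\,v] \to E[t\{v/x\}]$; $E[\langle F[\mathcal{S}k.t]\rangle] \to E[\langle t\{\lambda x.\langle F[x]\rangle/k\}\rangle]$ ($x\notin\mathrm{fv}(F)$); $E[\langle v\rangle]\to E[v]$. $t\Downarrow t'$ iff $t\to^*t'$ and $t'$ irreducible. Normal forms: values, control stuck terms $F[\mathcal{S}k.t]$, and open stuck terms $E[x\,v]$. Fresh: not free in the terms/contexts considered. Normal form bisimilarity $\sim$: for a relation $\mathcal R$ on terms, $E_0\mathrel{\mathcal R}E_1$ iff either $E_0=E_0'[\langle F_0\rangle]$, $E_1=E_1'[\langle F_1\rangle]$ ($F_i$ pure) with $E_0'[x]\mathrel{\mathcal R}E_1'[x]$ and $\langle F_0[x]\rangle\mathrel{\mathcal R}\langle F_1[x]\rangle$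 ($x$ fresh), or $E_0=F_0$, $E_1=F_1$ pure with $F_0[x]\mathrel{\mathcal R}F_1[x]$ ($x$ fresh). $v\mathbin{@}y$ is $x\,y$ if $v=x$, $t\{y/x\}$ if $v=\lambda x.t$. $\mathcal R^{\mathrm{nf}}$ on normal forms: $v_0\mathrel{\mathcal R^{\mathrm{nf}}}v_1$ if $v_0\mathbin{@}x\mathrel{\mathcal R}v_1\mathbin{@}x$ ($x$ fresh); $F_0[\mathcal{S}k.t_0]\mathrel{\mathcal R^{\mathrm{nf}}}F_1[\mathcal{S}k.t_1]$ if $F_0\mathrel{\mathcal R}F_1$ and $\langle t_0\rangle\mathrel{\mathcal R}\langle t_1\rangle$; $E_0[x\,v_0]\mathrel{\mathcal R^{\mathrm{nf}}}E_1[x\,v_1]$ if $E_0\mathrel{\mathcal R}E_1$ and $v_0\mathrel{\mathcal R^{\mathrm{nf}}}v_1$. $\mathcal R$ is a normal form simulation if $t_0\mathrel{\mathcal R}t_1$ and $t_0\Downarrow t_0'$ imply $t_1\Downarrow t_1'$ with $t_0'\mathrel{\mathcal R^{\mathrm{nf}}}t_1'$; a bisimulation if $\mathcal R$ and $\mathcal R^{-1}$ are simulations; $\sim$ is the largest normal form bisimulation. *)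

(* Defs.v *)
(* The calculus lambda_S (shift/reset) with de Bruijn indices:
   terms are represented up to alpha-conversion by de Bruijn terms; free
   variables are the indices that escape all enclosing binders. *)
From Stdlib Require Import Arith Relations.

Inductive term : Type :=
| Var : nat -> term
| Lam : term -> term
| App : term -> term -> term
| Shift : term -> term          (* S k.t, index 0 of the body is k *)
| Reset : term -> term.

Definition is_val (t : term) : Prop :=
  match t with Var _ | Lam _ => True | _ => False end.

Fixpoint lift (k : nat) (t : term) : term :=
  match t with
  | Var n => Var (if Nat.ltb n k then n else S n)
  | Lam b => Lam (lift (S k) b)
  | App a b => App (lift k a) (lift k b)
  | Shift b => Shift (lift (S k) b)
  | Reset b => Reset (lift k b)
  end.

Fixpoint subst (k : nat) (v : term) (t : term) : term :=
  match t with
  | Var n => if Nat.ltb n k then Var n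
             else if Nat.eqb n k then Nat.iter k (lift 0) v
             else Var (pred n)
  | Lam b => Lam (subst (S k) v b)
  | App a b => App (subst k v a) (subst k v b)
  | Shift b => Shift (subst (S k) v b)
  | Reset b => Reset (subst k v b)
  end.

Definition subst0 (v t : term) : term := subst 0 v t.

(* free variable x (index, counted outside all binders) occurs in t *)
Fixpoint free_in (x : nat) (t : term) : Prop :=
  match t with
  | Var n => n = x
  | Lam b => free_in (S x) b
  | App a b => free_in x a \/ free_in x b
  | Shift b => free_in (S x) b
  | Reset b => free_in x b
  end.

(* Contexts.  The hole is never under a binder. *)
Inductive ctx : Type :=
| Hole : ctx
| ArgC : term -> ctx -> ctx
| FunC : ctx -> term -> ctx
| ResetC : ctx -> ctx.

Fixpoint plug (E : ctx) (t : term) : term :=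
  match E with
  | Hole => t
  | ArgC v E' => App v (plug E' t)
  | FunC E' u => App (plug E' t) u
  | ResetC E' => Reset (plug E' t)
  end.

Fixpoint is_ectx (E : ctx) : Prop :=
  match E with
  | Hole => True
  | ArgC v E' => is_val v /\ is_ectx E'
  | FunC E' _ => is_ectx E'
  | ResetC E' => is_ectx E'
  end.

Fixpoint is_pure (E : ctx) : Prop :=
  match E with
  | Hole => True
  | ArgC v E' => is_val v /\ is_pure E'
  | FunC E' _ => is_pure E'
  | ResetC _ => False
  end.

Fixpoint lift_ctx (k : nat) (E : ctx) : ctx :=
  match E with
  | Hole => Hole
  | ArgC v E' => ArgC (lift k v) (lift_ctx k E')
  | FunC E' u => FunC (lift_ctx k E') (lift k u)
  | ResetC E' => ResetC (lift_ctx k E')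
  end.

Fixpoint free_in_ctx (x : nat) (E : ctx) : Prop :=
  match E with
  | Hole => False
  | ArgC v E' => free_in x v \/ free_in_ctx x E'
  | FunC E' u => free_in_ctx x E' \/ free_in x u
  | ResetC E' => free_in_ctx x E'
  end.

(* Reduction.  For the shift rule, \x.<F[x]> with x not free in F is
   Lam (Reset (plug (lift_ctx 0 F) (Var 0))). *)
Inductive step : term -> term -> Prop :=
| step_beta : forall E t v, is_ectx E -> is_val v ->
    step (plug E (App (Lam t) v)) (plug E (subst0 v t))
| step_shift : forall E F t, is_ectx E -> is_pure F ->
    step (plug E (Reset (plug F (Shift t))))
         (plug E (Reset (subst0 (Lam (Reset (plug (lift_ctx 0 F) (Var 0)))) t)))
| step_reset : forall E v, is_ectx E -> is_val v ->
    step (plug E (Reset v)) (plug E v).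

Definition irreducible (t : term) : Prop := forall u, ~ step t u.

Definition eval (t t' : term) : Prop :=
  clos_refl_trans term step t t' /\ irreducible t'.

Definition rel := term -> term -> Prop.

Definition app_val (v : term) (y : nat) : term :=
  match v with
  | Lam b => subst0 (Var y) b
  | _ => App v (Var y)
  end.

Fixpoint comp (E E' : ctx) : ctx :=
  match E with
  | Hole => E'
  | ArgC v E1 => ArgC v (comp E1 E')
  | FunC E1 u => FunC (comp E1 E') u
  | ResetC E1 => ResetC (comp E1 E')
  end.

Definition ctx_rel (R : rel) (E0 E1 : ctx) : Prop :=
  (exists E0' E1' F0 F1,
      is_ectx E0' /\ is_ectx E1' /\ is_pure F0 /\ is_pure F1 /\
      E0 = comp E0' (ResetC F0) /\ E1 = comp E1' (ResetC F1) /\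
      exists x, ~ free_in_ctx x E0 /\ ~ free_in_ctx x E1 /\
        R (plug E0' (Var x)) (plug E1' (Var x)) /\
        R (Reset (plug F0 (Var x))) (Reset (plug F1 (Var x))))
  \/
  (is_pure E0 /\ is_pure E1 /\
      exists x, ~ free_in_ctx x E0 /\ ~ free_in_ctx x E1 /\
        R (plug E0 (Var x)) (plug E1 (Var x))).

Definition val_rel (R : rel) (v0 v1 : term) : Prop :=
  is_val v0 /\ is_val v1 /\
  exists x, ~ free_in x v0 /\ ~ free_in x v1 /\ R (app_val v0 x) (app_val v1 x).

Definition nf_rel (R : rel) (t0 t1 : term) : Prop :=
  val_rel R t0 t1
  \/
  (exists F0 F1 s0 s1,
      is_pure F0 /\ is_pure F1 /\
      t0 = plug F0 (Shift s0) /\ t1 = plug F1 (Shift s1) /\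
      ctx_rel R F0 F1 /\ R (Reset s0) (Reset s1))
  \/
  (exists E0 E1 x v0 v1,
      is_ectx E0 /\ is_ectx E1 /\
      t0 = plug E0 (App (Var x) v0) /\ t1 = plug E1 (App (Var x) v1) /\
      ctx_rel R E0 E1 /\ val_rel R v0 v1).

Definition nf_simulation (R : rel) : Prop :=
  forall t0 t1 t0', R t0 t1 -> eval t0 t0' ->
    exists t1', eval t1 t1' /\ nf_rel R t0' t1'.

Definition nf_bisimulation (R : rel) : Prop :=
  nf_simulation R /\ nf_simulation (fun a b => R b a).

Definition nf_bisimilar (t0 t1 : term) : Prop :=
  exists R : rel, nf_bisimulation R /\ R t0 t1.

Notation "t0 ~nf t1" := (nf_bisimilar t0 t1) (at level 70).

(* Main.v *)
Require Import Defs.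
From Stdlib Require Import Arith Lia Relations.

Lemma plug_comp : forall E E' t, plug (comp E E') t = plug E (plug E' t).
Proof. induction E; intros; simpl; try rewrite IHE; auto. Qed.

Lemma comp_assoc : forall E1 E2 E3, comp (comp E1 E2) E3 = comp E1 (comp E2 E3).
Proof. induction E1; intros; simpl; try rewrite IHE1; auto. Qed.

Lemma ectx_comp : forall E E', is_ectx E -> is_ectx E' -> is_ectx (comp E E').
Proof. induction E; simpl; intuition. Qed.

Lemma pure_comp : forall E E', is_pure E -> is_pure E' -> is_pure (comp E E').
Proof. induction E; simpl; intuition. Qed.

Lemma pure_ectx : forall E, is_pure E -> is_ectx E.
Proof. induction E; simpl; intuition. Qed.

Lemma step_ctx : forall E a b, is_ectx E -> step a b -> step (plug E a) (plug E b).
Proof.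
  intros E a b HE H. destruct H.
  - rewrite <- !plug_comp. apply step_beta; auto. apply ectx_comp; auto.
  - rewrite <- !plug_comp. apply step_shift; auto. apply ectx_comp; auto.
  - rewrite <- !plug_comp. apply step_reset; auto. apply ectx_comp; auto.
Qed.

Lemma subst_lift : forall t k v, subst k v (lift k t) = t.
Proof.
  induction t; intros; simpl; try rewrite IHt; try rewrite IHt1; try rewrite IHt2; auto.
  destruct (Nat.ltb n k) eqn:E.
  - simpl. rewrite E. auto.
  - apply Nat.ltb_ge in E. cbn [subst].
    destruct (Nat.ltb (S n) k) eqn:E2. apply Nat.ltb_lt in E2; lia.
    destruct (Nat.eqb (S n) k) eqn:E3. apply Nat.eqb_eq in E3; lia. auto.
Qed.

Lemma subst_plug : forall F k v t,
  subst k v (plug (lift_ctx k F) t) = plug F (subst k v t).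
Proof.
  induction F; intros; simpl; try rewrite IHF; try rewrite subst_lift; auto.
Qed.

Lemma fresh_t : forall t, exists N, forall x, N <= x -> ~ free_in x t.
Proof.
  induction t; simpl.
  - exists (S n). intros; lia.
  - destruct IHt as [N H]. exists N. intros; apply H; lia.
  - destruct IHt1 as [N1 H1], IHt2 as [N2 H2]. exists (max N1 N2).
    intros x Hx [C|C]; [apply (H1 x)|apply (H2 x)]; auto; lia.
  - destruct IHt as [N H]. exists N. intros; apply H; lia.
  - destruct IHt as [N H]. exists N. intros; apply H; lia.
Qed.

Lemma fresh_c : forall E, exists N, forall x, N <= x -> ~ free_in_ctx x E.
Proof.
  induction E; simpl.
  - exists 0; auto.
  - destruct (fresh_t t) as [N1 H1], IHE as [N2 H2]. exists (max N1 N2).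
    intros x Hx [C|C]; [apply (H1 x)|apply (H2 x)]; auto; lia.
  - destruct (fresh_t t) as [N1 H1], IHE as [N2 H2]. exists (max N1 N2).
    intros x Hx [C|C]; [apply (H2 x)|apply (H1 x)]; auto; lia.
  - exact IHE.
Qed.

Lemma notval_plug : forall E r, ~ is_val r -> ~ is_val (plug E r).
Proof. destruct E; simpl; auto. Qed.

Definition Pr (r : term) : Prop :=
  (exists t v, r = App (Lam t) v /\ is_val v) \/ (exists s, r = Reset s).

Lemma Pr_nval : forall r, Pr r -> ~ is_val r.
Proof. intros r [[t [v [-> _]]]|[s ->]]; simpl; auto. Qed.

Lemma plug_eq : forall G E r b u, is_pure G -> is_ectx E -> Pr r ->
  plug E r = plug G (App (Lam b) u) ->
  (E = G /\ r = App (Lam b) u) \/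
  (exists E', is_ectx E' /\ E = comp G (ArgC (Lam b) E') /\ u = plug E' r).
Proof.
  induction G; intros E r b u HG HE Hr Heq.
  - destruct E; simpl in *.
    + left; auto.
    + injection Heq as -> <-. right. exists E; intuition.
    + injection Heq as H1 _. exfalso. apply (notval_plug E r (Pr_nval r Hr)). rewrite H1; simpl; auto.
    + discriminate.
  - destruct HG as [Hv HG]. destruct E; simpl in *.
    + subst r. exfalso. destruct Hr as [[t1 [v [Ht Hv']]]|[s Hs]]; try discriminate.
      injection Ht as _ H2. subst v. apply (notval_plug G (App (Lam b) u)); simpl; auto.
    + destruct HE as [_ HE]. injection Heq as -> H2.
      destruct (IHG E r b u HG HE Hr H2) as [[-> ->]|[E' [HE' [-> ->]]]].
      * left; auto.
      * right. exists E'. simpl; intuition.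
    + injection Heq as H1 _. exfalso. apply (notval_plug E r (Pr_nval r Hr)). rewrite H1; auto.
    + discriminate.
  - destruct E; simpl in *.
    + subst r. exfalso. destruct Hr as [[t1 [v [Ht Hv']]]|[s Hs]]; try discriminate.
      injection Ht as H1 _. apply (notval_plug G (App (Lam b) u)); simpl; auto. rewrite H1; simpl; auto.
    + destruct HE as [Hv _]. injection Heq as H1 _. exfalso.
      apply (notval_plug G (App (Lam b) u)); simpl; auto. rewrite <- H1; auto.
    + injection Heq as H2 ->.
      destruct (IHG E r b u HG HE Hr H2) as [[-> ->]|[E' [HE' [-> ->]]]].
      * left; auto.
      * right. exists E'. simpl; intuition.
    + discriminate.
  - destruct HG.
Qed.

Lemma step_inv : forall s w, step s w -> exists E r r', is_ectx E /\ s = plug E r /\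
  w = plug E r' /\ Pr r /\ step r r' /\
  (forall t v, r = App (Lam t) v -> is_val v /\ r' = subst0 v t).
Proof.
  intros s w H. destruct H.
  - exists E, (App (Lam t) v), (subst0 v t).
    refine (conj H (conj eq_refl (conj eq_refl (conj _ (conj (step_beta Hole t v I H0) _))))).
    + left; eauto.
    + intros t' v' Heq; injection Heq as -> ->; auto.
  - eexists E, _, _.
    refine (conj H (conj eq_refl (conj eq_refl (conj _ (conj (step_shift Hole F t I H0) _))))).
    + right; eauto.
    + discriminate.
  - eexists E, _, _.
    refine (conj H (conj eq_refl (conj eq_refl (conj _ (conj (step_reset Hole v I H0) _))))).
    + right; eauto.
    + discriminate.
Qed.

Lemma step_app_inv : forall G b u w, is_pure G -> step (plug G (App (Lam b) u)) w ->
  (is_val u /\ w = plug G (subst0 u b)) \/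
  (exists u', step u u' /\ w = plug G (App (Lam b) u')).
Proof.
  intros G b u w HG H.
  destruct (step_inv _ _ H) as [E [r [r' [HE [Heq [-> [Hr [Hs Hb]]]]]]]].
  destruct (plug_eq G E r b u HG HE Hr (eq_sym Heq)) as [[-> ->]|[E' [HE' [-> ->]]]].
  - left. destruct (Hb b u eq_refl) as [Hv ->]. auto.
  - right. exists (plug E' r'). split. apply step_ctx; auto.
    rewrite plug_comp; auto.
Qed.

Lemma progress : forall t, (exists u, step t u) \/ is_val t \/
  (exists F s, is_pure F /\ t = plug F (Shift s)) \/
  (exists E x v, is_ectx E /\ is_val v /\ t = plug E (App (Var x) v)).
Proof.
  induction t.
  - right; left; simpl; auto.
  - right; left; simpl; auto.
  - destruct IHt1 as [[u Hu]|[Hv|[[F [s [HF ->]]]|[E [x [v [HE [Hv ->]]]]]]]].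
    + left. exists (App u t2). exact (step_ctx (FunC Hole t2) _ _ I Hu).
    + destruct IHt2 as [[u Hu]|[Hv2|[[F [s [HF ->]]]|[E [x [v [HE [Hv' ->]]]]]]]].
      * left. exists (App t1 u). exact (step_ctx (ArgC t1 Hole) _ _ (conj Hv I) Hu).
      * destruct t1; simpl in Hv; try contradiction.
        -- right; right; right. exists Hole, n, t2. simpl; auto.
        -- left. eexists. exact (step_beta Hole t1 t2 I Hv2).
      * right; right; left. exists (ArgC t1 F), s. simpl; auto.
      * right; right; right. exists (ArgC t1 E), x, v. simpl; auto.
    + right; right; left. exists (FunC F t2), s. simpl; auto.
    + right; right; right. exists (FunC E t2), x, v. simpl; auto.
  - right; right; left. exists Hole, t. simpl; auto.
  - destruct IHt as [[u Hu]|[Hv|[[F [s [HF ->]]]|[E [x [v [HE [Hv ->]]]]]]]].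
    + left. exists (Reset u). exact (step_ctx (ResetC Hole) _ _ I Hu).
    + left. eexists. exact (step_reset Hole t I Hv).
    + left. eexists. exact (step_shift Hole F s I HF).
    + right; right; right. exists (ResetC E), x, v. simpl; auto.
Qed.

Lemma ectx_decomp : forall E, is_ectx E -> is_pure E \/
  exists E' F, is_ectx E' /\ is_pure F /\ E = comp E' (ResetC F).
Proof.
  induction E; simpl; intros H.
  - left; auto.
  - destruct H as [Hv H]. destruct (IHE H) as [Hp|[E' [F [H1 [H2 ->]]]]].
    + left; auto.
    + right. exists (ArgC t E'), F. simpl; auto.
  - destruct (IHE H) as [Hp|[E' [F [H1 [H2 ->]]]]].
    + left; auto.
    + right. exists (FunC E' t), F. simpl; auto.
  - destruct (IHE H) as [Hp|[E' [F [H1 [H2 ->]]]]].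
    + right. exists Hole, E. simpl; auto.
    + right. exists (ResetC E'), F. simpl; auto.
Qed.

Lemma fresh2c : forall E1 E2, exists x, ~ free_in_ctx x E1 /\ ~ free_in_ctx x E2.
Proof.
  intros. destruct (fresh_c E1) as [N1 H1], (fresh_c E2) as [N2 H2].
  exists (max N1 N2). split; [apply H1|apply H2]; lia.
Qed.

Lemma fresh1t : forall t, exists x, ~ free_in x t.
Proof. intros. destruct (fresh_t t) as [N H]. exists N. apply H; lia. Qed.

Lemma step_under : forall G b u u', is_pure G -> step u u' ->
  step (plug G (App (Lam b) u)) (plug G (App (Lam b) u')).
Proof.
  intros. pose proof (step_ctx (comp G (ArgC (Lam b) Hole)) u u') as H1.
  rewrite !plug_comp in H1. simpl in H1. apply H1; auto.
  apply ectx_comp. apply pure_ectx; auto. simpl; auto.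
Qed.

Section Q.
Variable Q : rel.
Hypothesis Qrefl : forall a, Q a a.

Lemma val_rel_refl : forall v, is_val v -> val_rel Q v v.
Proof.
  intros v Hv. destruct (fresh1t v) as [x Hx]. repeat split; auto. exists x; auto.
Qed.

Lemma ctx_rel_refl : forall E, is_ectx E -> ctx_rel Q E E.
Proof.
  intros E HE. destruct (fresh2c E E) as [x [Hx _]].
  destruct (ectx_decomp E HE) as [Hp|[E' [F [H1 [H2 ->]]]]].
  - right. repeat split; auto. exists x; auto.
  - left. exists E', E', F, F. repeat split; auto. exists x; auto.
Qed.

Lemma nf_rel_refl : forall t, irreducible t -> nf_rel Q t t.
Proof.
  intros t Ht.
  destruct (progress t) as [[u Hu]|[Hv|[[F [s [HF ->]]]|[E [x [v [HE [Hv ->]]]]]]]].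
  - exfalso; apply (Ht u Hu).
  - left. apply val_rel_refl; auto.
  - right; left. exists F, F, s, s. repeat split; auto.
    apply ctx_rel_refl, pure_ectx; auto.
  - right; right. exists E, E, x, v, v. repeat split; auto.
    apply ctx_rel_refl; auto. apply val_rel_refl; auto.
Qed.

Definition Spair (a c : term) : Prop :=
  exists G1 b1 G2 b2 u, is_pure G1 /\ is_pure G2 /\
    (forall v, is_val v -> plug G1 (subst0 v b1) = plug G2 (subst0 v b2)) /\
    a = plug G1 (App (Lam b1) u) /\ c = plug G2 (App (Lam b2) u).

Hypothesis QS : forall a c, Spair a c -> Q a c.

Lemma QS' : forall G1 b1 G2 b2 u, is_pure G1 -> is_pure G2 ->
    (forall v, is_val v -> plug G1 (subst0 v b1) = plug G2 (subst0 v b2)) ->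
    Q (plug G1 (App (Lam b1) u)) (plug G2 (App (Lam b2) u)).
Proof. intros. apply QS. exists G1, b1, G2, b2, u. auto. Qed.

Lemma sim_S : forall a a', clos_refl_trans_1n term step a a' -> irreducible a' ->
  forall G1 b1 G2 b2 u, is_pure G1 -> is_pure G2 ->
    (forall v, is_val v -> plug G1 (subst0 v b1) = plug G2 (subst0 v b2)) ->
    a = plug G1 (App (Lam b1) u) ->
    exists c', eval (plug G2 (App (Lam b2) u)) c' /\ nf_rel Q a' c'.
Proof.
  intros a a' H. induction H as [a|a a1 a' Hs Hrest IH]; intros Hirr G1 b1 G2 b2 u HG1 HG2 Hb ->.
  -
    assert (Hu : irreducible u).
    { intros u' Hu'. apply (Hirr (plug G1 (App (Lam b1) u'))).
      apply step_under; auto. }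
    assert (Hnv : ~ is_val u).
    { intros Hv. apply (Hirr (plug G1 (subst0 u b1))). apply step_beta; auto. apply pure_ectx; auto. }
    exists (plug G2 (App (Lam b2) u)). split.
    { split. apply rt_refl. intros w Hw.
      destruct (step_app_inv G2 b2 u w HG2 Hw) as [[Hv _]|[u' [Hu' _]]].
      apply Hnv; auto. apply (Hu u' Hu'). }
    destruct (progress u) as [[u' Hu']|[Hv|[[F [s [HF ->]]]|[E [x [v [HE [Hv ->]]]]]]]].
    + exfalso; apply (Hu u' Hu').
    + exfalso; apply Hnv; auto.
    + right; left. exists (comp G1 (ArgC (Lam b1) F)), (comp G2 (ArgC (Lam b2) F)), s, s.
      rewrite !plug_comp. simpl.
      assert (P1 : is_pure (comp G1 (ArgC (Lam b1) F))) by (apply pure_comp; simpl; auto).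
      assert (P2 : is_pure (comp G2 (ArgC (Lam b2) F))) by (apply pure_comp; simpl; auto).
      repeat split; auto.
      right. repeat split; auto.
      destruct (fresh2c (comp G1 (ArgC (Lam b1) F)) (comp G2 (ArgC (Lam b2) F))) as [y [Hy1 Hy2]].
      exists y. repeat split; auto. rewrite !plug_comp. simpl. apply QS'; auto.
    + right; right. exists (comp G1 (ArgC (Lam b1) E)), (comp G2 (ArgC (Lam b2) E)), x, v, v.
      rewrite !plug_comp. simpl.
      assert (P1 : is_ectx (comp G1 (ArgC (Lam b1) E))) by (apply ectx_comp; [apply pure_ectx|simpl]; auto).
      assert (P2 : is_ectx (comp G2 (ArgC (Lam b2) E))) by (apply ectx_comp; [apply pure_ectx|simpl]; auto).
      repeat split; auto.
      2: apply val_rel_refl; auto.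
      destruct (fresh2c (comp G1 (ArgC (Lam b1) E)) (comp G2 (ArgC (Lam b2) E))) as [y [Hy1 Hy2]].
      destruct (ectx_decomp E HE) as [Hp|[E' [F [H1 [H2 ->]]]]].
      * right. repeat split; try (apply pure_comp; simpl; auto).
        exists y. repeat split; auto. rewrite !plug_comp. simpl. apply QS'; auto.
      * left. exists (comp G1 (ArgC (Lam b1) E')), (comp G2 (ArgC (Lam b2) E')), F, F.
        repeat split; auto.
        -- apply ectx_comp; [apply pure_ectx|simpl]; auto.
        -- apply ectx_comp; [apply pure_ectx|simpl]; auto.
        -- rewrite comp_assoc; auto.
        -- rewrite comp_assoc; auto.
        -- exists y. repeat split; auto. rewrite !plug_comp. simpl. apply QS'; auto.
  - destruct (step_app_inv G1 b1 u a1 HG1 Hs) as [[Hv ->]|[u' [Hu' ->]]].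
    + exists a'. split.
      * split; auto. apply rt_trans with (plug G1 (subst0 u b1)).
        -- apply rt_step. rewrite Hb; auto. apply step_beta; auto. apply pure_ectx; auto.
        -- apply clos_rt1n_rt; auto.
      * apply nf_rel_refl; auto.
    + destruct (IH Hirr G1 b1 G2 b2 u' HG1 HG2 Hb eq_refl) as [c' [[Hc1 Hc2] Hc3]].
      exists c'. split; auto. split; auto.
      apply rt_trans with (plug G2 (App (Lam b2) u')); auto.
      apply rt_step. apply step_under; auto.
Qed.

Lemma sim_Q : forall t0 t1 t0', (t0 = t1 \/ Spair t0 t1) -> eval t0 t0' ->
  exists t1', eval t1 t1' /\ nf_rel Q t0' t1'.
Proof.
  intros t0 t1 t0' [<-|[G1 [b1 [G2 [b2 [u [H1 [H2 [H3 [-> ->]]]]]]]]]] [He Hi].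
  - exists t0'. split. split; auto. apply nf_rel_refl; auto.
  - apply clos_rt_rt1n in He. exact (sim_S _ _ He Hi G1 b1 G2 b2 u H1 H2 H3 eq_refl).
Qed.
End Q.

Definition Rb (a c : term) : Prop := a = c \/ Spair a c.

Lemma Spair_sym : forall a c, Spair a c -> Spair c a.
Proof.
  intros a c [G1 [b1 [G2 [b2 [u [H1 [H2 [H3 [-> ->]]]]]]]]].
  exists G2, b2, G1, b1, u. repeat split; auto. intros v Hv; symmetry; auto.
Qed.

Theorem proposition4 (F : ctx) (t0 t1 : term) :
  is_pure F ->
  plug F (App (Lam t0) t1) ~nf App (Lam (plug (lift_ctx 0 F) t0)) t1.
Proof.
  intros HF. exists Rb. split; [split|].
  - intros a c a' Hac Ha. apply (sim_Q Rb) with (t0 := a); auto.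
    + intros; left; auto.
    + intros; right; auto.
  - intros a c a' Hac Ha. apply (sim_Q (fun a b => Rb b a)) with (t0 := a); auto.
    + intros; left; auto.
    + intros; right; apply Spair_sym; auto.
    + destruct Hac as [->|Hs]; auto. right; apply Spair_sym; auto.
  - right. exists F, t0, Hole, (plug (lift_ctx 0 F) t0), t1. simpl. repeat split; auto.
    intros v Hv. unfold subst0. rewrite subst_plug. auto.
Qed.
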